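(* For any $\mathcal A,\mathcal B\in\mathbb Q^{n\times n\times n_3}$, \[0<\rho_{QT}(\mathcal A*_Q\mathcal B)<1\iff 0<\rho_{QT}(\mathcal B*_Q\mathcal A)<1.\]
   Context: $\mathbb Q$ denotes the real quaternions with the usual Hamilton multiplication and $|a|=\sqrt{a_0^2+a_1^2+a_2^2+a_3^2}$; $\mathbb C$ is identified with $\{a_0+a_1\mathbf i\}$. Every quaternion array $A=A_0+A_1\mathbf i+A_2\mathbf j+A_3\mathbf k$ (real $A_t$) is written uniquely as $A=A_{\mathbf d}+\mathbf jA_{\mathbf c}$ with $A_{\mathbf d}=A_0+A_1\mathbf i$, $A_{\mathbf c}=A_2-A_3\mathbf i$. For $\mathcal A\in\mathbb Q^{n_1\times n_2\times n_3}$, $\mathcal A^{(s)}=\mathcal A(:,:,s)$. For a complex tensor $\mathcal C$, $\mathtt{bcirc}(\mathcal C)$ is the block circulant matrix with $(p,q)$ block $\mathcal C^{(((p-q)\bmod n_3)+1)}$. $P_{n_3}$ is the permutation matrix with first row $e_1^T$ and $r$-th row $e_{n_3+2-r}^T$ ($r\ge2$). $\mathtt{bcirc_z}(\mathcal A)=\mathtt{bcirc}(\mathcal A_{\mathbf d})+\mathbf j\,\mathtt{bcirc}(\mathcal A_{\mathbf c})(P_{n_3}\otimes I_{n_2})$. $\mathtt{unfold}(\mathcal B)=[\mathcal B^{(1)};\dots;\mathcal B^{(n_3)}]$, $\mathtt{fold}$ its inverse; QT-product $\mathcal A*_Q\mathcal B=\mathtt{fold}(\mathtt{bcirc_z}(\mathcal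 A)\mathtt{unfold}(\mathcal B))$. A right eigenvalue of a square quaternion matrix $M$ is $\lambda\in\mathbb Q$ with $Mx=x\lambda$ for some $x\neq0$; $\rho(M)$ is the maximum of $|\lambda|$ over right eigenvalues. QT-spectral radius: $\rho_{QT}(\mathcal A)=\rho(\mathtt{bcirc_z}(\mathcal A))$. *)

(* Defs.v *)
From HB Require Import structures.
From mathcomp Require Import all_boot all_order all_algebra.
From mathcomp Require Import ring.
From mathcomp Require Import boolp classical_sets reals.
Set Implicit Arguments. Unset Strict Implicit. Unset Printing Implicit Defensive.
Import Order.TTheory GRing.Theory Num.Theory.
Local Open Scope ring_scope.

(* Real quaternions a0 + a1 i + a2 j + a3 k over a commutative ring R,    *)
Definition quat (R : comNzRingType) : Type := (R * R * R * R)%type.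

Section Quat.
Variable R : comNzRingType.

HB.instance Definition _ := GRing.Zmodule.on (quat R).

Definition qmk (a0 a1 a2 a3 : R) : quat R := (a0, a1, a2, a3).
Definition q0 (q : quat R) : R := q.1.1.1.
Definition q1 (q : quat R) : R := q.1.1.2.
Definition q2 (q : quat R) : R := q.1.2.
Definition q3 (q : quat R) : R := q.2.

Definition qone : quat R := qmk 1 0 0 0.

Definition qmul (p q : quat R) : quat R :=
  qmk (q0 p * q0 q - q1 p * q1 q - q2 p * q2 q - q3 p * q3 q)
      (q0 p * q1 q + q1 p * q0 q + q2 p * q3 q - q3 p * q2 q)
      (q0 p * q2 q - q1 p * q3 q + q2 p * q0 q + q3 p * q1 q)
      (q0 p * q3 q + q1 p * q2 q - q2 p * q1 q + q3 p * q0 q).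

Lemma quat_ext (p q : quat R) :
  q0 p = q0 q -> q1 p = q1 q -> q2 p = q2 q -> q3 p = q3 q -> p = q.
Proof.
by case: p => [[[a b] c] d]; case: q => [[[a' b'] c'] d'];
  rewrite /q0 /q1 /q2 /q3 /= => -> -> -> ->.
Qed.

Lemma qmulA : associative qmul.
Proof.
by move=> [[[a b] c] d] [[[a' b'] c'] d'] [[[x y] z] w];
  apply: quat_ext; rewrite /qmul /qmk /qone; unfold q0, q1, q2, q3; simpl; ring.
Qed.

Lemma qmul1 : left_id qone qmul.
Proof.
by move=> [[[a b] c] d]; apply: quat_ext; rewrite /qmul /qmk /qone; unfold q0, q1, q2, q3; simpl; ring.
Qed.

Lemma qmulr1 : right_id qone qmul.
Proof.
by move=> [[[a b] c] d]; apply: quat_ext; rewrite /qmul /qmk /qone; unfold q0, q1, q2, q3; simpl; ring.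
Qed.

Lemma qmulDl : left_distributive qmul +%R.
Proof.
by move=> [[[a b] c] d] [[[a' b'] c'] d'] [[[x y] z] w];
  apply: quat_ext; rewrite /qmul /qmk /qone; unfold q0, q1, q2, q3; simpl; ring.
Qed.

Lemma qmulDr : right_distributive qmul +%R.
Proof.
by move=> [[[a b] c] d] [[[a' b'] c'] d'] [[[x y] z] w];
  apply: quat_ext; rewrite /qmul /qmk /qone; unfold q0, q1, q2, q3; simpl; ring.
Qed.

Lemma qone_neq0 : qone != 0.
Proof. by apply/negP => /eqP [] /eqP; rewrite oner_eq0. Qed.

HB.instance Definition _ := GRing.Zmodule_isNzRing.Build (quat R)
  qmulA qmul1 qmulr1 qmulDl qmulDr qone_neq0.

Definition qj : quat R := qmk 0 0 1 0.

(* complex parts: q = q_d + j q_c with q_d = q0 + q1 i, q_c = q2 - q3 i *)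
Definition qdpart (q : quat R) : quat R := qmk (q0 q) (q1 q) 0 0.
Definition qcpart (q : quat R) : quat R := qmk (q2 q) (- q3 q) 0 0.

End Quat.

Definition qnorm (R : realType) (q : quat R) : R :=
  Num.sqrt (q0 q ^+ 2 + q1 q ^+ 2 + q2 q ^+ 2 + q3 q ^+ 2).

(* Third-order tensors in Q^{n1 x n2 x n3}: the family of frontal slices  *)
(* A^{(s)} = A(:,:,s), s : 'I_n3 (0-based).                               *)
Definition qtensor (R : comNzRingType) (n1 n2 n3 : nat) :=
  'I_n3 -> 'M[quat R]_(n1, n2).

Section Tensor.
Variable R : comNzRingType.

Definition tdpart n1 n2 n3 (A : qtensor R n1 n2 n3) : qtensor R n1 n2 n3 :=
  fun s => map_mx (@qdpart R) (A s).
Definition tcpart n1 n2 n3 (A : qtensor R n1 n2 n3) : qtensor R n1 n2 n3 :=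
  fun s => map_mx (@qcpart R) (A s).

Lemma ord_modsub_proof n (p q : 'I_n) : ((p + (n - q)) %% n < n)%N.
Proof. by apply: ltn_pmod; apply: leq_ltn_trans (ltn_ord p). Qed.
Definition ord_modsub n (p q : 'I_n) : 'I_n := Ordinal (ord_modsub_proof p q).

Definition bcirc n1 n2 n3 (C : qtensor R n1 n2 n3) :
    'M[quat R]_(\sum_(i < n3) n1, \sum_(j < n3) n2) :=
  @mxblock _ n3 n3 (fun _ => n1) (fun _ => n2)
    (fun p q => C (ord_modsub p q)).

(* the permutation matrix P_{n3}: row 1 is e_1, row r >= 2 is e_{n3+2-r};  *)
(* 0-based: row p has its 1 in column (n3 - p) mod n3                     *)
Definition Pperm n3 : 'M[quat R]_n3 :=
  \matrix_(p < n3, q < n3) (((q : nat) == (n3 - p) %% n3)%N)%:R.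

(* Kronecker product P_{n3} (x) I_{n2}, as a block matrix *)
Definition Pkron n3 n2 :
    'M[quat R]_(\sum_(i < n3) n2, \sum_(j < n3) n2) :=
  @mxblock _ n3 n3 (fun _ => n2) (fun _ => n2)
    (fun p q => (Pperm n3 p q)%:M : 'M[quat R]_n2).

Definition bcirc_z n1 n2 n3 (A : qtensor R n1 n2 n3) :
    'M[quat R]_(\sum_(i < n3) n1, \sum_(j < n3) n2) :=
  bcirc (tdpart A) + qj R *: (bcirc (tcpart A) *m Pkron n3 n2).

Definition unfold n1 n2 n3 (B : qtensor R n1 n2 n3) :
    'M[quat R]_(\sum_(i < n3) n1, n2) :=
  @mxcol _ n3 (fun _ => n1) n2 (fun s => B s).

Definition fold n1 n2 n3 (M : 'M[quat R]_(\sum_(i < n3) n1, n2)) :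
    qtensor R n1 n2 n3 :=
  fun s => submxcol (p_ := fun _ : 'I_n3 => n1) M s.

Definition qtprod n1 n2 n4 n3 (A : qtensor R n1 n2 n3)
    (B : qtensor R n2 n4 n3) : qtensor R n1 n4 n3 :=
  fold (bcirc_z A *m unfold B).

End Tensor.

Definition right_eigenvalue (R : comNzRingType) (k : nat)
    (M : 'M[quat R]_k) (lam : quat R) : Prop :=
  exists x : 'cV[quat R]_k, x != 0 /\ M *m x = \col_i (x i 0 * lam).

Definition spec_radius (R : realType) (k : nat) (M : 'M[quat R]_k) : R :=
  sup [set qnorm lam | lam in right_eigenvalue M]%classic.

Definition rho_QT (R : realType) n n3 (A : qtensor R n n n3) : R :=
  spec_radius (bcirc_z A).

(* Main.v *)
Require Import Defs.
From HB Require Import structures.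
From mathcomp Require Import all_boot all_order all_algebra.
From mathcomp Require Import ring.
From mathcomp Require Import boolp classical_sets reals.
Import Order.TTheory GRing.Theory Num.Theory.
Local Open Scope ring_scope.

Section Modular.
Variable n : nat.
Implicit Types p q t u v : 'I_n.
Local Notation osub := (@ord_modsub n).

Lemma oadd_proof p q : ((p + q) %% n < n)%N.
Proof. by apply: ltn_pmod; apply: leq_ltn_trans (ltn_ord p). Qed.
Definition oadd p q : 'I_n := Ordinal (oadd_proof p q).

Definition cg u (a : int) := (n%:Z %| u%:Z - a)%Z.

Lemma cg_refl u : cg u u.
Proof. by rewrite /cg subrr dvdz0. Qed.

Lemma cg_sub u v a b : cg u a -> cg v b -> cg (osub u v) (a - b).
Proof.
rewrite /cg => ha hb.
have h : (n%:Z %| (osub u v)%:Z - (u%:Z - v%:Z))%Z.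
  rewrite -eqz_mod_dvd /= -modz_nat modz_mod PoszD -subzn ?(ltnW (ltn_ord v)) //.
  by rewrite addrCA modzDl.
have -> : (osub u v)%:Z - (a - b) =
   ((osub u v)%:Z - (u%:Z - v%:Z)) + (u%:Z - a) - (v%:Z - b) by ring.
by rewrite rpredB // rpredD.
Qed.

Lemma cg_add u v a b : cg u a -> cg v b -> cg (oadd u v) (a + b).
Proof.
rewrite /cg => ha hb.
have h : (n%:Z %| (oadd u v)%:Z - (u%:Z + v%:Z))%Z.
  by rewrite -eqz_mod_dvd /= -modz_nat modz_mod PoszD.
have -> : (oadd u v)%:Z - (a + b) =
   ((oadd u v)%:Z - (u%:Z + v%:Z)) + (u%:Z - a) + (v%:Z - b) by ring.
by rewrite /cg; apply: rpredD; first apply: rpredD.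
Qed.

Lemma ord_eq_cg u v a b : cg u a -> cg v b -> a = b -> u = v.
Proof.
rewrite /cg => ha hb eab; subst b.
have : (n%:Z %| u%:Z - v%:Z)%Z.
  have -> : u%:Z - v%:Z = (u%:Z - a) - (v%:Z - a) by ring.
  by rewrite rpredB.
rewrite -eqz_mod_dvd !modz_nat !modn_small // => /eqP [] h.
exact: val_inj.
Qed.

End Modular.

Ltac solve_cg := repeat match goal with
 | |- is_true (cg _ (ord_modsub _ _) _) => apply: cg_sub
 | |- is_true (cg _ (oadd _ _ _) _) => apply: cg_add
 | |- is_true (cg _ _ _) => apply: cg_refl end.
Ltac ord_ring := eapply ord_eq_cg; [solve_cg | solve_cg | idtac]; ring.

Section ModId.
Variable n : nat.
Implicit Types p q t r : 'I_n.
Local Notation osub := (@ord_modsub n).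
Local Notation oadd := (@oadd n).

Lemma I1 p q t : osub (osub p q) (osub t q) = osub p t. Proof. ord_ring. Qed.
Lemma I2 p q t : oadd (osub p q) (oadd t q) = oadd p t. Proof. ord_ring. Qed.
Lemma I3 p q t : osub (oadd p q) (oadd t q) = osub p t. Proof. ord_ring. Qed.
Lemma I4 p q t : oadd (oadd p q) (osub t q) = oadd p t. Proof. ord_ring. Qed.
Lemma osub_inj q : injective (fun t => osub t q).
Proof. move=> u v /= h. have: oadd (osub u q) q = oadd (osub v q) q by rewrite h.
have e t : oadd (osub t q) q = t by ord_ring.
by rewrite !e. Qed.
Lemma oadd_inj q : injective (fun t => oadd t q).
Proof. move=> u v /= h. have: osub (oadd u q) q = osub (oadd v q) q by rewrite h.
have e t : osub (oadd t q) q = t by ord_ring.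
by rewrite !e. Qed.
Lemma I5 p q : osub p (osub (osub q q) q) = oadd p q. Proof. ord_ring. Qed.
Lemma I6 r q : ((q : nat) == (n - r) %% n)%N = (r == osub (osub q q) q).
Proof.
have -> : ((n - r) %% n)%N = osub (osub r r) r.
  by rewrite /= subnKC ?modnn ?add0n //; exact: ltnW.
rewrite val_eqE; apply/eqP/eqP => h.
- rewrite h; ord_ring.
- rewrite h; ord_ring.
Qed.
End ModId.

Set Implicit Arguments.
Unset Strict Implicit.
Section Alg.
Variable R : comNzRingType.
Local Notation Q := (quat R).
Definition ccq (z : Q) : Q := qmk (q0 z) (- q1 z) 0 0.
Ltac qsolve := repeat match goal with x : quat R |- _ => let a := fresh "a" in let b := fresh "b" in let c := fresh "c" in let d := fresh "d" in move: x => [[[a b] c] d] end;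
  apply: quat_ext; unfold GRing.mul, GRing.add, GRing.opp, GRing.zero; simpl; unfold qmul, qdpart, qcpart, ccq, qj, qmk, q0, q1, q2, q3; simpl; ring.
Lemma L1 (x : Q) : x = qdpart x + qj R * qcpart x.
Proof. qsolve. Qed.
Lemma L2 (x y : Q) : qdpart (x * y) = qdpart x * qdpart y - ccq (qcpart x) * qcpart y.
Proof. qsolve. Qed.
Lemma L3 (x y : Q) : qcpart (x * y) = ccq (qdpart x) * qcpart y + qcpart x * qdpart y.
Proof. qsolve. Qed.
Lemma L4 (x y : Q) : qdpart (qdpart x + qj R * qcpart y) = qdpart x.
Proof. qsolve. Qed.
Lemma L5 (x y : Q) : qcpart (qdpart x + qj R * qcpart y) = qcpart y.
Proof. qsolve. Qed.
Lemma dD (x y : Q) : qdpart (x + y) = qdpart x + qdpart y.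
Proof. qsolve. Qed.
Lemma cD (x y : Q) : qcpart (x + y) = qcpart x + qcpart y.
Proof. qsolve. Qed.
Lemma d0 : qdpart (0 : Q) = 0.
Proof. qsolve. Qed.
Lemma c0 : qcpart (0 : Q) = 0.
Proof. qsolve. Qed.

Definition Dm m k (X : 'M[Q]_(m, k)) := map_mx (@qdpart R) X.
Definition Cm m k (X : 'M[Q]_(m, k)) := map_mx (@qcpart R) X.
Definition CCm m k (X : 'M[Q]_(m, k)) := map_mx ccq X.

Lemma dsum (I : finType) (F : I -> Q) : qdpart (\sum_i F i) = \sum_i qdpart (F i).
Proof. exact: (big_morph _ dD d0). Qed.
Lemma csum (I : finType) (F : I -> Q) : qcpart (\sum_i F i) = \sum_i qcpart (F i).
Proof. exact: (big_morph _ cD c0). Qed.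

Lemma M1 m k (X : 'M[Q]_(m, k)) : X = Dm X + qj R *: Cm X.
Proof. by apply/matrixP => i j; rewrite !mxE -L1. Qed.
Lemma M2 m k l (X : 'M[Q]_(m, k)) (Y : 'M[Q]_(k, l)) :
  Dm (X *m Y) = Dm X *m Dm Y - CCm (Cm X) *m Cm Y.
Proof.
apply/matrixP => i j; rewrite !mxE dsum -sumrB; apply: eq_bigr => r _.
by rewrite L2 !mxE.
Qed.
Lemma M3 m k l (X : 'M[Q]_(m, k)) (Y : 'M[Q]_(k, l)) :
  Cm (X *m Y) = CCm (Dm X) *m Cm Y + Cm X *m Dm Y.
Proof.
apply/matrixP => i j; rewrite !mxE csum -big_split; apply: eq_bigr => r _.
by rewrite L3 !mxE.
Qed.
Lemma M4 m k (X Y : 'M[Q]_(m, k)) : Dm (Dm X + qj R *: Cm Y) = Dm X.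
Proof. by apply/matrixP => i j; rewrite !mxE L4. Qed.
Lemma M5 m k (X Y : 'M[Q]_(m, k)) : Cm (Dm X + qj R *: Cm Y) = Cm Y.
Proof. by apply/matrixP => i j; rewrite !mxE L5. Qed.
Lemma Dsum m k (I : finType) (F : I -> 'M[Q]_(m, k)) : Dm (\sum_i F i) = \sum_i Dm (F i).
Proof. by apply/matrixP => i j; rewrite !mxE !summxE dsum; apply: eq_bigr => r _; rewrite !mxE. Qed.
Lemma Csum m k (I : finType) (F : I -> 'M[Q]_(m, k)) : Cm (\sum_i F i) = \sum_i Cm (F i).
Proof. by apply/matrixP => i j; rewrite !mxE !summxE csum; apply: eq_bigr => r _; rewrite !mxE. Qed.
Lemma DCeq m k (X Y : 'M[Q]_(m, k)) : Dm X = Dm Y -> Cm X = Cm Y -> X = Y.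
Proof. by move=> h1 h2; rewrite (M1 X) (M1 Y) h1 h2. Qed.

Lemma scale_mxblock (p q : nat) (p_ : 'I_p -> nat) (q_ : 'I_q -> nat) (a : Q)
  (B : forall i j, 'M[Q]_(p_ i, q_ j)) :
  a *: \mxblock_(i, j) B i j = \mxblock_(i, j) (a *: B i j).
Proof. by apply/matrixP => i j; rewrite !mxE. Qed.

Variables n n3 : nat.
Local Notation osub := (@ord_modsub n3).
Local Notation oadd := (@oadd n3).

Definition bz (T : qtensor R n n n3) (p q : 'I_n3) : 'M[Q]_n :=
  Dm (T (osub p q)) + qj R *: Cm (T (oadd p q)).

Lemma bcirc_zE (T : qtensor R n n n3) : bcirc_z T = \mxblock_(p, q) bz T p q.
Proof.
rewrite /bcirc_z /bcirc /Pkron mul_mxblock scale_mxblock -mxblockD.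
apply: eq_mxblock => p q; rewrite /bz; congr (_ + _ *: _).
rewrite (bigD1 (osub (osub q q) q)) //= big1 ?addr0.
  by rewrite mxE I6 eqxx /= mulmx1 /tcpart I5.
move=> r hr; rewrite mxE I6 (negbTE hr) /= mulr0n.
by apply/matrixP => i j; rewrite !mxE big1 // => k _; rewrite !mxE ?mulr0n ?mul0rn ?mulr0.
Qed.

Lemma qtprodE (A B : qtensor R n n n3) s : qtprod A B s = \sum_r bz A s r *m B r.
Proof. by rewrite /qtprod /fold /unfold bcirc_zE mul_mxblock_mxrow mxcolK. Qed.

Lemma bcirc_zM (A B : qtensor R n n n3) :
  bcirc_z (qtprod A B) = bcirc_z A *m bcirc_z B.
Proof.
rewrite !bcirc_zE mul_mxblock; apply: eq_mxblock => p q.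
apply: DCeq.
- rewrite {1}/bz M4 qtprodE !Dsum.
  under eq_bigr do rewrite M2 /bz !M4 !M5.
  under [RHS]eq_bigr do rewrite M2 /bz !M4 !M5.
  rewrite !sumrB; congr (_ - _).
  + rewrite (reindex_inj (@osub_inj n3 q)); apply: eq_bigr => t _; by rewrite I1.
  + rewrite (reindex_inj (@oadd_inj n3 q)); apply: eq_bigr => t _; by rewrite I2.
- rewrite {1}/bz M5 qtprodE !Csum.
  under eq_bigr do rewrite M3 /bz !M4 !M5.
  under [RHS]eq_bigr do rewrite M3 /bz !M4 !M5.
  rewrite !big_split; congr (_ + _).
  + rewrite (reindex_inj (@oadd_inj n3 q)); apply: eq_bigr => t _; by rewrite I3.
  + rewrite (reindex_inj (@osub_inj n3 q)); apply: eq_bigr => t _; by rewrite I4.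
Qed.

End Alg.
Set Implicit Arguments.
Unset Strict Implicit.

Section Spec.
Local Open Scope classical_set_scope.
Variable R : realType.
Local Notation Q := (quat R).

Definition nq (z : Q) : R := q0 z ^+ 2 + q1 z ^+ 2 + q2 z ^+ 2 + q3 z ^+ 2.

Lemma nq_mul (x y : Q) : nq (x * y) = nq x * nq y.
Proof.
change (nq (qmul x y) = nq x * nq y).
move: x y => [[[a b] c] d] [[[a' b'] c'] d'].
rewrite /nq; unfold qmul, qmk, q0, q1, q2, q3; simpl; ring.
Qed.

Lemma nq0 (z : Q) : nq z = 0 -> z = 0.
Proof.
move: z => [[[a b] c] d]; rewrite /nq /q0 /q1 /q2 /q3 /= => h.
have ha : 0 <= a ^+ 2 := sqr_ge0 a.
have hb : 0 <= b ^+ 2 := sqr_ge0 b.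
have hc : 0 <= c ^+ 2 := sqr_ge0 c.
have hd : 0 <= d ^+ 2 := sqr_ge0 d.
move/eqP: h; rewrite paddr_eq0 ?addr_ge0 // => /andP [].
rewrite paddr_eq0 ?addr_ge0 // => /andP [].
rewrite paddr_eq0 ?addr_ge0 // => /andP [].
rewrite !sqrf_eq0 => /eqP -> /eqP -> /eqP -> /eqP ->.
by [].
Qed.

Lemma nqz : nq (0 : Q) = 0.
Proof. by rewrite /nq /q0 /q1 /q2 /q3 /= expr0n /= !addr0. Qed.

Lemma qmul_eq0 (x l : Q) : x * l = 0 -> l != 0 -> x = 0.
Proof.
move=> h hl; apply: nq0; have := congr1 nq h; rewrite nq_mul nqz => /eqP.
rewrite mulf_eq0 => /orP [/eqP //|/eqP /nq0 hl0].
by rewrite hl0 eqxx in hl.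
Qed.

Lemma qnorm0 : qnorm (0 : Q) = 0.
Proof. by rewrite /qnorm /q0 /q1 /q2 /q3 /= expr0n /= !addr0 sqrtr0. Qed.

Lemma eig_swap k (M N : 'M[Q]_k) lam :
  lam != 0 -> right_eigenvalue (M *m N) lam -> right_eigenvalue (N *m M) lam.
Proof.
move=> hl [x [hx e]]; exists (N *m x); split.
  apply/negP => /eqP h0; move: e; rewrite -mulmxA h0 mulmx0 => e.
  move/negP: hx; apply; apply/eqP/matrixP => i j; rewrite (ord1 j) mxE.
  have := congr1 (fun X : 'cV[Q]_k => X i 0) e; rewrite !mxE => /esym h.
  exact: (qmul_eq0 h hl).
have -> : N *m M *m (N *m x) = N *m (M *m N *m x) by rewrite !mulmxA.
rewrite e; apply/matrixP => i j; rewrite !mxE (ord1 j) mulr_suml.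
by apply: eq_bigr => r _; rewrite !mxE mulrA.
Qed.

Lemma supU0 (S : set R) : (forall x, S x -> 0 <= x) ->
  sup (S `|` [set 0]) = sup S.
Proof.
move=> S0; have [hs|nhs] := pselect (has_sup S).
  have [[x Sx] _] := hs.
  have hsup0 : 0 <= sup S := le_trans (S0 _ Sx) (sup_upper_bound hs Sx).
  have hsU : has_sup (S `|` [set 0]).
    split; first by exists 0; right.
    by exists (sup S) => y [/(sup_upper_bound hs)|->].
  apply/le_anti/andP; split.
    by apply: ge_sup; [by exists 0; right|] => y [/(sup_upper_bound hs)|->].
  apply: ge_sup; first by exists x.
  by move=> y Sy; apply: (sup_upper_bound hsU); left.
rewrite (sup_out nhs); have [[x Sx]|S0'] := pselect (S !=set0)%classic.
  apply: sup_out => -[_ [u hu]]; apply: nhs; split; first by exists x.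
  by exists u => y Sy; apply: hu; left.
have -> : S `|` [set 0] = [set 0].
  apply/seteqP; split => y /=; last by move=> ->; right.
  by case=> // Sy; exfalso; apply: S0'; exists y.
by rewrite sup1.
Qed.

Lemma sup_eq0 (S T : set R) : (forall x, S x -> 0 <= x) -> (forall x, T x -> 0 <= x) ->
  (forall x, S x -> x != 0 -> T x) -> (forall x, T x -> x != 0 -> S x) ->
  sup S = sup T.
Proof.
move=> hS hT hST hTS; rewrite -(supU0 hS) -(supU0 hT); congr sup.
apply/seteqP; split => y /=.
  case=> [Sy|->]; last by right.
  by have [->|nz] := eqVneq y 0; [right|left; apply: hST].
case=> [Ty|->]; last by right.
by have [->|nz] := eqVneq y 0; [right|left; apply: hTS].
Qed.

Lemma spec_swap k (M N : 'M[Q]_k) : spec_radius (M *m N) = spec_radius (N *m M).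
Proof.
rewrite /spec_radius; apply: sup_eq0.
- by move=> x [lam _ <-]; exact: sqrtr_ge0.
- by move=> x [lam _ <-]; exact: sqrtr_ge0.
- move=> x [lam hl <-] hx; exists lam => //; apply: eig_swap => //.
  by apply: contraNneq hx => ->; rewrite qnorm0.
- move=> x [lam hl <-] hx; exists lam => //; apply: eig_swap => //.
  by apply: contraNneq hx => ->; rewrite qnorm0.
Qed.

End Spec.

Lemma rho_swap (R : realType) (n n3 : nat) (A B : qtensor R n n n3) :
  rho_QT (qtprod A B) = rho_QT (qtprod B A).
Proof.
rewrite /rho_QT (bcirc_zM A B) (bcirc_zM B A).
exact: (spec_swap (bcirc_z A) (bcirc_z B)).
Qed.

Theorem lemma4p3 (R : realType) (n n3 : nat) (A B : qtensor R n n n3) :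
  (0 < rho_QT (qtprod A B) < 1) <-> (0 < rho_QT (qtprod B A) < 1).
Proof. by rewrite rho_swap. Qed.
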